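(* Let $0<\alpha\le 5\pi/6$ and let $u,v\in V$ with $\{u,v\}\in E$. Then either $\{u,v\}\in E_\alpha$, or there is a path $u_0,u_1,\dots,u_m$ with $u_0=u$, $u_m=v$, $\{u_i,u_{i+1}\}\in E_\alpha$ and $d(u_i,u_{i+1})<d(u,v)$ for all $i=0,\dots,m-1$.
   Context: Let $V$ be a finite set of pairwise distinct points (nodes) in the Euclidean plane, $d$ the Euclidean distance, and $R>0$. Let $G_R=(V,E)$ be the undirected graph with $E=\{\{u,v\}: u\neq v,\ d(u,v)\le R\}$. Fix a finite increasing sequence of radius levels $0<r_1<r_2<\dots<r_k=R$. For $u\in V$ and $1\le i\le k$ let $S_i(u)=\{v\in V\setminus\{u\}: d(u,v)\le r_i\}$. For $0<\alpha<2\pi$, a closed cone of width $\alpha$ with apex $u$ is a set $\{u+t(\cos\varphi,\sin\varphi): t\ge 0,\ \varphi\in[\theta-\alpha/2,\theta+\alpha/2]\}$ for some $\theta$. A finite set $S\subseteq V\setminus\{u\}$ has an $\alpha$-gap (at $u$) if some closed cone of width $\alpha$ with apex $u$ contains no node of $S$ (in particular $\emptyset$ has an $\alpha$-gap). The algorithm CBTC($\alpha$) assigns to each $u$ the index $i_u$ = the least $i\in\{1,\dots,k\}$ such that $S_i(u)$ has no $\alpha$-gap, or $i_u=k$ if there is no such $i$; set $N_\alpha(u)=S_{i_u}(u)$ and $N_\alpha=\{(u,v): v\in N_\alpha(u)\}$. Let $E_\alpha=\{\{u,v\}: (u,v)\in N_\alpha \text{ or } (v,u)\in N_\alpha\}$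 (the symmetric closure of $N_\alpha$) and $G_\alpha=(V,E_\alpha)$. *)

(* Defs.v *)
From Stdlib Require Import Reals List.
Open Scope R_scope.

Definition point : Type := (R * R)%type.

Definition euclid_dist (p q : point) : R :=
  sqrt ((fst p - fst q) ^ 2 + (snd p - snd q) ^ 2).

(* Radius levels r_1 < ... < r_k = Rad, indexed 1..k (r 0 is unused). *)
Definition radius_levels (r : nat -> R) (k : nat) (Rad : R) : Prop :=
  (1 <= k)%nat /\ 0 < r 1%nat /\
  (forall i, (1 <= i)%nat -> (i < k)%nat -> r i < r (S i)) /\
  r k = Rad.

Definition edge_R (V : list point) (Rad : R) (u v : point) : Prop :=
  In u V /\ In v V /\ u <> v /\ euclid_dist u v <= Rad.

Definition S_set (V : list point) (r : nat -> R) (i : nat) (u v : point) : Prop :=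
  In v V /\ v <> u /\ euclid_dist u v <= r i.

Definition in_cone (u : point) (alpha theta : R) (p : point) : Prop :=
  exists t phi, 0 <= t /\ theta - alpha / 2 <= phi <= theta + alpha / 2 /\
    p = (fst u + t * cos phi, snd u + t * sin phi).

Definition has_gap (u : point) (alpha : R) (S : point -> Prop) : Prop :=
  exists theta, forall p, S p -> ~ in_cone u alpha theta p.

Definition cbtc_index (V : list point) (r : nat -> R) (k : nat) (alpha : R)
    (u : point) (i : nat) : Prop :=
  (1 <= i <= k)%nat /\
  ( (~ has_gap u alpha (S_set V r i u) /\
       forall j, (1 <= j)%nat -> (j < i)%nat -> has_gap u alpha (S_set V r j u))
    \/ (i = k /\ forall j, (1 <= j <= k)%nat -> has_gap u alpha (S_set V r j u)) ).

Definition N_alpha (V : list point) (r : nat -> R) (k : nat) (alpha : R)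
    (u v : point) : Prop :=
  In u V /\ exists i, cbtc_index V r k alpha u i /\ S_set V r i u v.

Definition E_alpha (V : list point) (r : nat -> R) (k : nat) (alpha : R)
    (u v : point) : Prop :=
  N_alpha V r k alpha u v \/ N_alpha V r k alpha v u.

(* Main.v *)
Require Import Defs.
From Stdlib Require Import Reals List Lra Lia Psatz Classical.
Open Scope R_scope.

Lemma cos_ge_half x : 0 <= x <= PI/3 -> 1/2 <= cos x.
Proof.
  intros [H1 H2]. rewrite <- cos_PI3. pose proof PI_RGT_0.
  destruct (Req_dec x (PI/3)) as [->|Hne]; [lra|].
  left. apply cos_decreasing_1; lra.
Qed.

Lemma cos_le_mhalf x : PI <= x <= 4*PI/3 -> cos x <= -1/2.
Proof.
  intros H. replace x with ((x - PI) + PI) by ring. rewrite neg_cos.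
  pose proof (cos_ge_half (x - PI)). lra.
Qed.

Lemma bilin (A C K D r1 r2 : R) :
  0 < D -> 2*D*A <= r1 < D -> 2*D*C <= r2 < D ->
  8*A*C*K < 0 -> 1 - 2*A + 4*C*K <= 0 -> 1 - 2*C + 4*A*K <= 0 ->
  2 - 2*A - 2*C + 2*K <= 0 ->
  r1^2 + r2^2 - 2*D*r1*A - 2*D*r2*C + 2*r1*r2*K < 0.
Proof.
  intros HD [h1 h1'] [h2 h2'] F00 F10 F01 F11.
  set (P1 := r1 - 2*D*A). set (P2 := r2 - 2*D*C).
  set (Q1 := D - r1). set (Q2 := D - r2).
  assert (B : D*P1 + D*P2 + 2*r1*r2*K < 0).
  { assert (Hid : (D*P1 + D*P2 + 2*r1*r2*K) * (P1+Q1) * (P2+Q2) =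
       Q1*Q2*(D*D*(8*A*C*K)) + P1*Q2*(D*D*(1 - 2*A + 4*C*K))
       + Q1*P2*(D*D*(1 - 2*C + 4*A*K)) + P1*P2*(D*D*(2 - 2*A - 2*C + 2*K))).
    { unfold P1, P2, Q1, Q2. ring. }
    assert (HP1 : 0 <= P1) by (unfold P1; lra).
    assert (HP2 : 0 <= P2) by (unfold P2; lra).
    assert (HQ1 : 0 < Q1) by (unfold Q1; lra).
    assert (HQ2 : 0 < Q2) by (unfold Q2; lra).
    assert (HDD : 0 < D*D) by nra.
    assert (T1 : Q1*Q2*(D*D*(8*A*C*K)) < 0).
    { assert (0 < Q1*Q2) by nra. assert (D*D*(8*A*C*K) < 0) by nra. nra. }
    assert (T2 : P1*Q2*(D*D*(1 - 2*A + 4*C*K)) <= 0).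
    { assert (0 <= P1*Q2) by nra. assert (D*D*(1 - 2*A + 4*C*K) <= 0) by nra. nra. }
    assert (T3 : Q1*P2*(D*D*(1 - 2*C + 4*A*K)) <= 0).
    { assert (0 <= Q1*P2) by nra. assert (D*D*(1 - 2*C + 4*A*K) <= 0) by nra. nra. }
    assert (T4 : P1*P2*(D*D*(2 - 2*A - 2*C + 2*K)) <= 0).
    { assert (0 <= P1*P2) by nra. assert (D*D*(2 - 2*A - 2*C + 2*K) <= 0) by nra. nra. }
    assert (Hpos : 0 < (P1+Q1)*(P2+Q2)) by nra.
    assert (Hneg : (D*P1 + D*P2 + 2*r1*r2*K) * ((P1+Q1) * (P2+Q2)) < 0).
    { rewrite <- Rmult_assoc, Hid. lra. }
    destruct (Rlt_or_le (D*P1 + D*P2 + 2*r1*r2*K) 0) as [|Hc]; [auto|].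
    exfalso. assert (0 <= (D*P1 + D*P2 + 2*r1*r2*K) * ((P1+Q1) * (P2+Q2))) by nra. lra. }
  assert (E1 : r1^2 - 2*D*r1*A <= D*P1) by (unfold P1; nra).
  assert (E2 : r2^2 - 2*D*r2*C <= D*P2) by (unfold P2; nra).
  lra.
Qed.

Lemma core (D r1 r2 a c : R) :
  0 < D -> 0 < r1 < D -> 0 < r2 < D -> 0 <= a <= PI -> 0 <= c <= PI ->
  a + c <= 5*PI/6 -> 2*D*cos a <= r1 -> 2*D*cos c <= r2 ->
  (r1*cos a + r2*cos c - D)^2 + (r1*sin a - r2*sin c)^2 < D^2.
Proof.
  intros HD Hr1 Hr2 Ha Hc Hac Hb1 Hb2.
  pose proof PI_RGT_0 as HPI.
  assert (HA : cos a < 1/2) by nra.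
  assert (HC : cos c < 1/2) by nra.
  assert (Ha3 : PI/3 < a).
  { destruct (Rle_lt_dec a (PI/3)); auto. pose proof (cos_ge_half a). lra. }
  assert (Hc3 : PI/3 < c).
  { destruct (Rle_lt_dec c (PI/3)); auto. pose proof (cos_ge_half c). lra. }
  assert (HA0 : 0 < cos a) by (apply cos_gt_0; lra).
  assert (HC0 : 0 < cos c) by (apply cos_gt_0; lra).
  assert (HSa : 0 <= sin a) by (apply sin_ge_0; lra).
  assert (HSc : 0 <= sin c) by (apply sin_ge_0; lra).
  assert (HK : cos (a + c) < 0) by (apply cos_lt_0; lra).
  assert (H2c : cos (a + c + c) <= -1/2) by (apply cos_le_mhalf; lra).
  assert (H2a : cos (a + c + a) <= -1/2) by (apply cos_le_mhalf; lra).
  rewrite cos_plus in H2c, H2a. rewrite sin_plus in H2c, H2a.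
  assert (EK := cos_plus a c).
  pose proof (sin2_cos2 a) as Pa. pose proof (sin2_cos2 c) as Pc.
  unfold Rsqr in Pa, Pc.
  set (A := cos a) in *. set (C := cos c) in *. set (Sa := sin a) in *.
  set (Sc := sin c) in *. set (K := cos (a+c)) in *.
  assert (F10 : 1 - 2*A + 4*C*K <= 0).
  { rewrite EK in H2c |- *. nra. }
  assert (F01 : 1 - 2*C + 4*A*K <= 0).
  { rewrite EK in H2a |- *. nra. }
  assert (F11 : 2 - 2*A - 2*C + 2*K <= 0).
  { assert (Hsq : ((1-A)*(1-C))^2 <= (Sa*Sc)^2).
    { replace ((Sa*Sc)^2) with ((1 - A*A)*(1-C*C)) by nra. nra. }
    assert (0 <= Sa*Sc) by nra. assert (0 <= (1-A)*(1-C)) by nra.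
    assert ((1-A)*(1-C) <= Sa*Sc) by nra. rewrite EK. nra. }
  assert (F00 : 8*A*C*K < 0).
  { assert (0 < A*C) by nra. nra. }
  pose proof (bilin A C K D r1 r2 HD ltac:(lra) ltac:(lra) F00 F10 F01 F11) as HB.
  assert (EQ : (r1*A + r2*C - D)^2 + (r1*Sa - r2*Sc)^2 =
     D^2 + (r1^2 + r2^2 - 2*D*r1*A - 2*D*r2*C + 2*r1*r2*K)).
  { rewrite EK. replace (r1^2) with (r1^2*(Sa*Sa+A*A)) by (rewrite Pa; ring).
    replace (r2^2) with (r2^2*(Sc*Sc+C*C)) by (rewrite Pc; ring). ring. }
  rewrite EQ. lra.
Qed.

Definition fX (o : point) th0 (x : point) :=
  (fst x - fst o) * cos th0 + (snd x - snd o) * sin th0.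
Definition fY (o : point) th0 s (x : point) :=
  s * (-(fst x - fst o) * sin th0 + (snd x - snd o) * cos th0).
Definition ang o th0 x := acos (fX o th0 x / euclid_dist o x).

Lemma edist_sq p q : euclid_dist p q ^ 2 = (fst p - fst q)^2 + (snd p - snd q)^2.
Proof.
  unfold euclid_dist. rewrite pow2_sqrt; [ring|]. apply Rplus_le_le_0_compat; apply pow2_ge_0.
Qed.

Lemma edist_nonneg p q : 0 <= euclid_dist p q.
Proof. unfold euclid_dist. apply sqrt_pos. Qed.

Lemma edist_sym p q : euclid_dist p q = euclid_dist q p.
Proof. unfold euclid_dist. f_equal. ring. Qed.

Lemma edist_pos p q : p <> q -> 0 < euclid_dist p q.
Proof.
  intros H. destruct (Rle_lt_or_eq_dec 0 _ (edist_nonneg p q)) as [|E]; auto.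
  exfalso. apply H. pose proof (edist_sq p q) as Q. rewrite <- E in Q.
  destruct p as [p1 p2], q as [q1 q2]; simpl in Q.
  pose proof (pow2_ge_0 (p1 - q1)). pose proof (pow2_ge_0 (p2 - q2)).
  assert ((p1 - q1)^2 = 0) by lra. assert ((p2 - q2)^2 = 0) by lra.
  assert (p1 = q1) by nra. assert (p2 = q2) by nra. subst; auto.
Qed.

Lemma edist_lt_of_sq p q D : 0 <= D -> euclid_dist p q ^ 2 < D ^ 2 -> euclid_dist p q < D.
Proof. intros HD H. pose proof (edist_nonneg p q). nra. Qed.

Lemma frame_facts o th0 s x : s * s = 1 -> x <> o ->
  let rho := euclid_dist o x in
  0 < rho /\ fX o th0 x ^ 2 + fY o th0 s x ^ 2 = rho ^ 2 /\
  fX o th0 x = rho * cos (ang o th0 x) /\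
  (0 <= fY o th0 s x -> fY o th0 s x = rho * sin (ang o th0 x)) /\
  (fY o th0 s x < 0 -> fY o th0 s x = - (rho * sin (ang o th0 x))) /\
  0 <= ang o th0 x <= PI.
Proof.
  intros Hs Hx rho.
  assert (Hr : 0 < rho) by (apply edist_pos; auto).
  assert (HXY : fX o th0 x ^ 2 + fY o th0 s x ^ 2 = rho ^ 2).
  { unfold rho. rewrite edist_sq. unfold fX, fY.
    pose proof (sin2_cos2 th0) as P. unfold Rsqr in P.
    set (c := cos th0) in *. set (sn := sin th0) in *.
    replace ((s * (- (fst x - fst o) * sn + (snd x - snd o) * c)) ^ 2)
      with ((s*s) * ((- (fst x - fst o) * sn + (snd x - snd o) * c)) ^ 2) by ring.
    rewrite Hs.
    transitivity (((fst x - fst o) ^ 2 + (snd x - snd o) ^ 2) * (sn*sn+c*c)); [ring|].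
    rewrite P. ring. }
  set (X := fX o th0 x) in *. set (Y := fY o th0 s x) in *.
  assert (Hz : -1 <= X / rho <= 1).
  { assert (X^2 <= rho^2) by nra.
    split.
    - apply Rmult_le_reg_r with rho; auto. unfold Rdiv. rewrite Rmult_assoc, Rinv_l by lra. nra.
    - apply Rmult_le_reg_r with rho; auto. unfold Rdiv. rewrite Rmult_assoc, Rinv_l by lra. nra. }
  assert (Hc : cos (ang o th0 x) = X / rho) by (unfold ang; fold X; fold rho; apply cos_acos; auto).
  assert (H1 : 1 - (X/rho)² = (Y/rho)^2).
  { assert (E : (X/rho)*(X/rho) + (Y/rho)^2 = (X^2+Y^2)/rho^2) by (field; lra).
    rewrite HXY in E. replace (rho^2/rho^2) with 1 in E by (field; lra).
    unfold Rsqr. lra. }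
  assert (Hsn : sin (ang o th0 x) = sqrt ((Y/rho)^2)).
  { unfold ang; fold X; fold rho. rewrite sin_acos by auto. rewrite H1. auto. }
  split; [auto|]. split; [auto|]. split.
  { rewrite Hc. field. lra. }
  split; [|split].
  - intros HY. rewrite Hsn, sqrt_pow2. field; lra.
    unfold Rdiv. apply Rmult_le_pos; auto. left; apply Rinv_0_lt_compat; auto.
  - intros HY. rewrite Hsn. replace ((Y/rho)^2) with ((-Y/rho)^2) by (field; lra).
    rewrite sqrt_pow2. field; lra.
    unfold Rdiv. apply Rmult_le_pos; [lra|]. left; apply Rinv_0_lt_compat; auto.
  - apply acos_bound.
Qed.

Lemma frame_dist o g th0 x D :
  fst g - fst o = D * cos th0 -> snd g - snd o = D * sin th0 ->
  euclid_dist x g ^ 2 = euclid_dist o x ^ 2 - 2 * D * fX o th0 x + D ^ 2.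
Proof.
  intros H1 H2. rewrite !edist_sq. unfold fX.
  replace (fst x - fst g) with ((fst x - fst o) - (fst g - fst o)) by ring.
  replace (snd x - snd g) with ((snd x - snd o) - (snd g - snd o)) by ring.
  rewrite H1, H2. pose proof (sin2_cos2 th0) as P. unfold Rsqr in P.
  replace (fst o - fst x) with (-(fst x - fst o)) by ring.
  replace (snd o - snd x) with (-(snd x - snd o)) by ring.
  transitivity ((fst x - fst o) ^ 2 + (snd x - snd o) ^ 2 -
     2 * D * ((fst x - fst o) * cos th0 + (snd x - snd o) * sin th0) + D ^ 2 * (sin th0 * sin th0 + cos th0 * cos th0)); [ring|].
  rewrite P. ring.
Qed.

Lemma polar e1 e2 : e1 ^ 2 + e2 ^ 2 = 1 -> exists th, cos th = e1 /\ sin th = e2.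
Proof.
  intros H. assert (Hb : -1 <= e1 <= 1) by nra.
  assert (Hs : sin (acos e1) = Rabs e2).
  { rewrite sin_acos by auto. replace (1 - e1²) with (e2^2) by (unfold Rsqr; lra).
    rewrite <- sqrt_Rsqr_abs. unfold Rsqr. f_equal. ring. }
  destruct (Rle_lt_dec 0 e2).
  - exists (acos e1). split; [apply cos_acos; auto|]. rewrite Hs, Rabs_right; lra.
  - exists (- acos e1). rewrite cos_neg, sin_neg. split; [apply cos_acos; auto|].
    rewrite Hs, Rabs_left; lra.
Qed.

Lemma min_exists {A} (l : list A) (P : A -> Prop) (g : A -> R) (d : R) :
  exists m, (m = d \/ exists x, In x l /\ P x /\ m = g x) /\ m <= d /\
    forall x, In x l -> P x -> m <= g x.
Proof.
  induction l as [|a l IH].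
  - exists d. split; [auto|]. split; [lra|]. intros x [].
  - destruct IH as [m [Hm1 [Hm2 Hm3]]].
    destruct (classic (P a /\ g a < m)) as [[Pa Hlt]|Hn].
    + exists (g a). split; [right; exists a; simpl; auto|]. split; [lra|].
      intros x [<-|Hx] Px; [lra|]. specialize (Hm3 x Hx Px); lra.
    + exists m. split.
      { destruct Hm1 as [|[x [Hx Px]]]; auto. right. exists x. simpl; auto. }
      split; auto. intros x [Ea|Hx] Px; auto. subst x.
      destruct (Rlt_le_dec (g a) m); auto. exfalso; apply Hn; auto.
Qed.

Lemma frame_gap (o : point) (l : list point) (S : point -> Prop) (alpha th0 s : R) :
  (s = 1 \/ s = -1) ->
  (forall x, S x -> In x l /\ x <> o) ->
  ~ has_gap o alpha S -> 0 < alpha < PI ->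
  exists x1 x2, S x1 /\ S x2 /\ 0 <= fY o th0 s x1 /\ fY o th0 s x2 < 0 /\
    ang o th0 x1 + ang o th0 x2 <= alpha.
Proof.
  intros Hs HS Hng Hal. pose proof PI_RGT_0 as HPI.
  apply NNPP; intro Hn.
  assert (H : forall x1 x2, S x1 -> S x2 -> 0 <= fY o th0 s x1 -> fY o th0 s x2 < 0 ->
             alpha < ang o th0 x1 + ang o th0 x2).
  { intros x1 x2 H1 H2 H3 H4. apply Rnot_le_lt. intro. apply Hn. exists x1, x2. auto. }
  destruct (min_exists l (fun x => S x /\ 0 <= fY o th0 s x) (ang o th0) PI)
    as [am [Ham1 [Ham2 Ham3]]].
  destruct (min_exists l (fun x => S x /\ fY o th0 s x < 0) (ang o th0) PI)
    as [bm [Hbm1 [Hbm2 Hbm3]]].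
  assert (Ham0 : 0 <= am).
  { destruct Ham1 as [->|[x [_ [_ ->]]]]; [lra|]. unfold ang; apply acos_bound. }
  assert (Hbm0 : 0 <= bm).
  { destruct Hbm1 as [->|[x [_ [_ ->]]]]; [lra|]. unfold ang; apply acos_bound. }
  assert (Hsum : alpha < am + bm).
  { destruct Ham1 as [->|[x1 [_ [[S1 Y1] ->]]]]; [lra|].
    destruct Hbm1 as [->|[x2 [_ [[S2 Y2] ->]]]]; [lra|]. auto. }
  apply Hng. exists (th0 + s * ((am - bm) / 2)). intros x Sx Hc.
  destruct Hc as [t [phi [Ht [Hphi Heq]]]].
  destruct (HS x Sx) as [Hin Hxo].
  set (psi := s * (phi - th0)).
  assert (Hpsi : (am-bm)/2 - alpha/2 <= psi <= (am-bm)/2 + alpha/2).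
  { destruct Hs as [-> | ->]; unfold psi; lra. }
  assert (Hcs : cos psi = cos (phi - th0) /\ sin psi = s * sin (phi - th0)).
  { unfold psi. destruct Hs as [-> | ->].
    - rewrite !Rmult_1_l. auto.
    - replace (-1 * (phi - th0)) with (- (phi - th0)) by ring.
      rewrite cos_neg, sin_neg. split; ring. }
  destruct Hcs as [Hcos Hsin].
  rewrite cos_minus in Hcos. rewrite sin_minus in Hsin.
  assert (HX : fX o th0 x = t * cos psi).
  { rewrite Heq. unfold fX. cbn [fst snd]. rewrite Hcos. ring. }
  assert (HY : fY o th0 s x = t * sin psi).
  { rewrite Heq. unfold fY. cbn [fst snd]. rewrite Hsin. ring. }
  assert (Hrho : euclid_dist o x = t).
  { rewrite Heq. unfold euclid_dist. cbn [fst snd].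
    pose proof (sin2_cos2 phi) as P. unfold Rsqr in P.
    replace ((fst o - (fst o + t * cos phi)) ^ 2 + (snd o - (snd o + t * sin phi)) ^ 2)
      with (t ^ 2 * (sin phi * sin phi + cos phi * cos phi)) by ring.
    rewrite P, Rmult_1_r. apply sqrt_pow2. auto. }
  assert (Htp : 0 < t).
  { destruct (Rle_lt_or_eq_dec 0 t Ht) as [|E]; auto. exfalso. apply Hxo.
    rewrite Heq, <- E. destruct o; simpl. f_equal; ring. }
  assert (Hang : ang o th0 x = acos (cos psi)).
  { unfold ang. rewrite HX, Hrho. f_equal. field. lra. }
  destruct (Rle_lt_dec 0 psi) as [Hp|Hp].
  - assert (psi < am) by lra.
    assert (E : ang o th0 x = psi) by (rewrite Hang; apply acos_cos; lra).
    assert (0 <= fY o th0 s x) by (rewrite HY; apply Rmult_le_pos; [lra|apply sin_ge_0; lra]).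
    specialize (Ham3 x Hin (conj Sx H1)). lra.
  - assert (-bm < psi) by lra.
    assert (E : ang o th0 x = - psi).
    { rewrite Hang, <- cos_neg. apply acos_cos; lra. }
    assert (HYn : fY o th0 s x < 0).
    { rewrite HY. assert (sin psi < 0) by (apply sin_lt_0_var; lra). nra. }
    specialize (Hbm3 x Hin (conj Sx HYn)). lra.
Qed.

Lemma pair_close u v th0 th1 D w t :
  0 < D -> fst v - fst u = D*cos th0 -> snd v - snd u = D*sin th0 ->
  cos th1 = - cos th0 -> sin th1 = - sin th0 ->
  w <> u -> t <> v -> euclid_dist u w < D -> euclid_dist v t < D ->
  D <= euclid_dist w v -> D <= euclid_dist t u ->
  ((0 <= fY u th0 1 w /\ 0 <= fY v th1 (-1) t) \/
   (fY u th0 1 w < 0 /\ fY v th1 (-1) t < 0)) ->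
  ang u th0 w + ang v th1 t <= 5*PI/6 ->
  euclid_dist w t < D.
Proof.
  intros HD Hv1 Hv2 Hc1 Hs1 Hwu Htv Hdw Hdt Hbw Hbt Hside Hang.
  assert (Hu1 : fst u - fst v = D * cos th1) by (rewrite Hc1; lra).
  assert (Hu2 : snd u - snd v = D * sin th1) by (rewrite Hs1; lra).
  assert (Hone : 1 * 1 = 1) by ring. assert (Hmone : -1 * -1 = 1) by ring.
  destruct (frame_facts u th0 1 w Hone Hwu) as [Hr1 [_ [HXw [HYw1 [HYw2 Hbw']]]]].
  destruct (frame_facts v th1 (-1) t Hmone Htv) as [Hr2 [_ [HXt [HYt1 [HYt2 Hbt']]]]].
  pose proof (frame_dist u v th0 w D Hv1 Hv2) as Fw.
  pose proof (frame_dist v u th1 t D Hu1 Hu2) as Ft.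
  set (r1 := euclid_dist u w) in *. set (r2 := euclid_dist v t) in *.
  set (a := ang u th0 w) in *. set (c := ang v th1 t) in *.
  assert (B1 : 2 * D * cos a <= r1).
  { assert (D^2 <= euclid_dist w v ^ 2) by nra. rewrite HXw in Fw. nra. }
  assert (B2 : 2 * D * cos c <= r2).
  { assert (D^2 <= euclid_dist t u ^ 2) by nra. rewrite HXt in Ft. nra. }
  pose proof (core D r1 r2 a c HD ltac:(lra) ltac:(lra) Hbw' Hbt' Hang B1 B2) as HC.
  apply edist_lt_of_sq; [lra|]. rewrite edist_sq.
  assert (EQ : (fst w - fst t) ^ 2 + (snd w - snd t) ^ 2 =
     (fX u th0 w + fX v th1 t - D)^2 + (fY u th0 1 w - fY v th1 (-1) t)^2).
  { unfold fX, fY. rewrite Hc1, Hs1.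
    replace (fst w - fst t) with ((fst w - fst u) - (fst t - fst v) - (fst v - fst u)) by ring.
    replace (snd w - snd t) with ((snd w - snd u) - (snd t - snd v) - (snd v - snd u)) by ring.
    rewrite Hv1, Hv2.
    pose proof (sin2_cos2 th0) as P. unfold Rsqr in P.
    set (p1 := fst w - fst u - (fst t - fst v)).
    set (p2 := snd w - snd u - (snd t - snd v)).
    transitivity ((p1 * cos th0 + p2 * sin th0 - D) ^ 2 + (- p1 * sin th0 + p2 * cos th0) ^ 2
       + (sin th0 * sin th0 + cos th0 * cos th0 - 1) * (D^2 - p1^2 - p2^2)).
    - unfold p1, p2. ring.
    - rewrite P. unfold p1, p2. ring. }
  rewrite EQ, HXw, HXt.
  destruct Hside as [[Y1 Y2]|[Y1 Y2]].
  - rewrite (HYw1 Y1), (HYt1 Y2). exact HC.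
  - rewrite (HYw2 Y1), (HYt2 Y2).
    replace ((- (r1 * sin a) - - (r2 * sin c)) ^ 2) with ((r1 * sin a - r2 * sin c) ^ 2) by ring.
    exact HC.
Qed.

Lemma geo (u v : point) (Su Sv : point -> Prop) (l : list point) (alpha : R) :
  u <> v -> 0 < alpha <= 5*PI/6 ->
  (forall x, Su x -> In x l /\ x <> u /\ euclid_dist u x < euclid_dist u v /\
                     euclid_dist u v <= euclid_dist x v) ->
  (forall x, Sv x -> In x l /\ x <> v /\ euclid_dist v x < euclid_dist u v /\
                     euclid_dist u v <= euclid_dist x u) ->
  ~ has_gap u alpha Su -> ~ has_gap v alpha Sv ->
  exists w t, Su w /\ Sv t /\ euclid_dist w t < euclid_dist u v.
Proof.
  intros Huv Hal HSu HSv Gu Gv. pose proof PI_RGT_0 as HPI.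
  set (D := euclid_dist u v) in *.
  assert (HD : 0 < D) by (apply edist_pos; auto).
  assert (He : ((fst v - fst u)/D)^2 + ((snd v - snd u)/D)^2 = 1).
  { assert (E : ((fst v - fst u)/D)^2 + ((snd v - snd u)/D)^2 =
       ((fst u - fst v)^2 + (snd u - snd v)^2)/D^2) by (field; lra).
    rewrite E, <- edist_sq. fold D. field. lra. }
  destruct (polar _ _ He) as [th0 [Hc0 Hs0]].
  assert (Hv1 : fst v - fst u = D * cos th0) by (rewrite Hc0; field; lra).
  assert (Hv2 : snd v - snd u = D * sin th0) by (rewrite Hs0; field; lra).
  set (th1 := th0 + PI).
  assert (Hc1 : cos th1 = - cos th0) by apply neg_cos.
  assert (Hs1 : sin th1 = - sin th0) by apply neg_sin.
  assert (Hal' : 0 < alpha < PI) by lra.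
  destruct (frame_gap u l Su alpha th0 1 (or_introl eq_refl)
     (fun x Hx => let '(conj a (conj b _)) := HSu x Hx in conj a b) Gu Hal')
    as [w1 [w2 [Sw1 [Sw2 [Yw1 [Yw2 Aw]]]]]].
  destruct (frame_gap v l Sv alpha th1 (-1) (or_intror eq_refl)
     (fun x Hx => let '(conj a (conj b _)) := HSv x Hx in conj a b) Gv Hal')
    as [t1 [t2 [St1 [St2 [Yt1 [Yt2 At]]]]]].
  destruct (HSu w1 Sw1) as [_ [Hw1u [Dw1 Bw1]]].
  destruct (HSu w2 Sw2) as [_ [Hw2u [Dw2 Bw2]]].
  destruct (HSv t1 St1) as [_ [Ht1v [Dt1 Bt1]]].
  destruct (HSv t2 St2) as [_ [Ht2v [Dt2 Bt2]]].
  destruct (Rle_lt_dec (ang u th0 w1 + ang v th1 t1) alpha).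
  - exists w1, t1. split; [auto|]. split; [auto|].
    apply (pair_close u v th0 th1 D w1 t1); auto. lra.
  - exists w2, t2. split; [auto|]. split; [auto|].
    apply (pair_close u v th0 th1 D w2 t2); auto. lra.
Qed.

Definition Pth V r k alpha (u v : point) L :=
  exists (m : nat) (p : nat -> point), p 0%nat = u /\ p m = v /\
    forall i, (i < m)%nat ->
      E_alpha V r k alpha (p i) (p (S i)) /\ euclid_dist (p i) (p (S i)) < L.

Lemma Pth_refl V r k alpha u L : Pth V r k alpha u u L.
Proof. exists 0%nat, (fun _ => u). split; [auto|]. split; [auto|]. intros; lia. Qed.

Lemma Pth_single V r k alpha x y L :
  E_alpha V r k alpha x y -> euclid_dist x y < L -> Pth V r k alpha x y L.
Proof.
  intros H1 H2. exists 1%nat, (fun i => match i with O => x | _ => y end).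
  split; [auto|]. split; [auto|]. intros i Hi. assert (i = 0%nat) by lia. subst. auto.
Qed.

Lemma Pth_mono V r k alpha x y L L' :
  L <= L' -> Pth V r k alpha x y L -> Pth V r k alpha x y L'.
Proof.
  intros HL [m [p [H0 [H1 H2]]]]. exists m, p. split; [auto|]. split; [auto|].
  intros i Hi. destruct (H2 i Hi). split; [auto|lra].
Qed.

Lemma Pth_trans V r k alpha x y z L :
  Pth V r k alpha x y L -> Pth V r k alpha y z L -> Pth V r k alpha x z L.
Proof.
  intros [m1 [p1 [A0 [A1 A2]]]] [m2 [p2 [B0 [B1 B2]]]].
  set (p := fun i => if Nat.leb i m1 then p1 i else p2 (i - m1)%nat).
  assert (Hp1 : forall j, (j <= m1)%nat -> p j = p1 j).
  { intros j Hj. unfold p. apply Nat.leb_le in Hj. rewrite Hj. auto. }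
  assert (Hp2 : forall j, (m1 <= j)%nat -> p j = p2 (j - m1)%nat).
  { intros j Hj. unfold p. destruct (Nat.leb j m1) eqn:E.
    - apply Nat.leb_le in E. assert (j = m1) by lia. subst.
      rewrite Nat.sub_diag, B0. auto.
    - auto. }
  exists (m1 + m2)%nat, p. split.
  { rewrite Hp1 by lia. auto. }
  split.
  { rewrite Hp2 by lia. replace (m1 + m2 - m1)%nat with m2 by lia. auto. }
  intros i Hi. destruct (Nat.lt_ge_cases i m1) as [Hl|Hg].
  - rewrite !Hp1 by lia. apply A2; auto.
  - rewrite !Hp2 by lia. replace (S i - m1)%nat with (S (i - m1)) by lia. apply B2. lia.
Qed.

Definition mu (V : list point) (u v : point) : nat :=
  length (filter (fun pq => if Rlt_dec (euclid_dist (fst pq) (snd pq)) (euclid_dist u v)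
                            then true else false) (list_prod V V)).

Lemma filter_le {A} (f g : A -> bool) (l : list A) :
  (forall z, In z l -> f z = true -> g z = true) ->
  (length (filter f l) <= length (filter g l))%nat.
Proof.
  induction l as [|a l IH]; simpl; intros H; [lia|].
  assert (IH' := IH (fun z Hz => H z (or_intror Hz))).
  destruct (f a) eqn:Ef.
  - rewrite (H a (or_introl eq_refl) Ef). simpl. lia.
  - destruct (g a); simpl; lia.
Qed.

Lemma filter_lt {A} (f g : A -> bool) (l : list A) :
  (forall z, In z l -> f z = true -> g z = true) ->
  (exists z, In z l /\ g z = true /\ f z = false) ->
  (length (filter f l) < length (filter g l))%nat.
Proof.
  induction l as [|a l IH]; simpl; intros H [z [Hz [Gz Fz]]]; [contradiction|].
  assert (H' : forall z, In z l -> f z = true -> g z = true) by (intros; apply H; auto).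
  destruct Hz as [<-|Hz].
  - rewrite Fz, Gz. simpl. pose proof (filter_le f g l H'). lia.
  - assert (IH' := IH H' (ex_intro _ z (conj Hz (conj Gz Fz)))).
    destruct (f a) eqn:Ef.
    + rewrite (H a (or_introl eq_refl) Ef). simpl. lia.
    + destruct (g a); simpl; lia.
Qed.

Lemma mu_lt V x y u v : In x V -> In y V -> euclid_dist x y < euclid_dist u v ->
  (mu V x y < mu V u v)%nat.
Proof.
  intros Hx Hy Hd. unfold mu. apply filter_lt.
  - intros z _ Hf. destruct (Rlt_dec _ (euclid_dist x y)); [|discriminate].
    destruct (Rlt_dec _ (euclid_dist u v)); auto. lra.
  - exists (x, y). split; [apply in_prod; auto|]. simpl.
    destruct (Rlt_dec (euclid_dist x y) (euclid_dist u v)); [|lra].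
    destruct (Rlt_dec (euclid_dist x y) (euclid_dist x y)); [lra|]. auto.
Qed.

Lemma least_nat (P : nat -> Prop) n : P n -> exists m, P m /\ forall j, (j < m)%nat -> ~ P j.
Proof.
  revert P. induction n as [n IH] using (well_founded_induction Wf_nat.lt_wf). intros P Hn.
  destruct (classic (exists j, (j < n)%nat /\ P j)) as [[j [Hj Pj]]|Hno].
  - apply (IH j Hj P Pj).
  - exists n. split; auto. intros j Hj Pj. apply Hno. eauto.
Qed.

Lemma idx_exists V r k alpha u : (1 <= k)%nat -> exists i, cbtc_index V r k alpha u i.
Proof.
  intros Hk.
  destruct (classic (exists j, (1 <= j <= k)%nat /\ ~ has_gap u alpha (S_set V r j u)))
    as [[j Hj]|Hno].
  - destruct (least_nat (fun j => (1 <= j <= k)%nat /\ ~ has_gap u alpha (S_set V r j u)) j Hj)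
      as [m [[Hm1 Hm2] Hm3]].
    exists m. split; auto. left. split; auto. intros j' H1 H2.
    apply NNPP. intro Hg. apply (Hm3 j' H2). split; [lia|auto].
  - exists k. split; [lia|]. right. split; auto. intros j Hj.
    apply NNPP. intro Hg. apply Hno. eauto.
Qed.

Lemma main_ind V Rad r k alpha :
  0 < Rad -> radius_levels r k Rad -> 0 < alpha -> alpha <= 5 * PI / 6 ->
  forall n u v, (mu V u v < n)%nat -> edge_R V Rad u v ->
  E_alpha V r k alpha u v \/ Pth V r k alpha u v (euclid_dist u v).
Proof.
  intros HR Hrl Ha1 Ha2 n. induction n as [|n IHn]; intros u v Hmu He; [lia|].
  destruct He as [Hu [Hv [Huv HdR]]].
  set (D := euclid_dist u v) in *.
  assert (IH' : forall x y, In x V -> In y V -> x <> y -> euclid_dist x y < D ->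
                Pth V r k alpha x y D).
  { intros x y Hx Hy Hxy Hd.
    assert (He' : edge_R V Rad x y) by (repeat split; auto; lra).
    assert (Hm : (mu V x y < n)%nat) by (pose proof (mu_lt V x y u v Hx Hy Hd); lia).
    destruct (IHn x y Hm He') as [E|P].
    - apply Pth_single; auto.
    - apply (Pth_mono _ _ _ _ _ _ (euclid_dist x y)); auto; lra. }
  destruct (classic (E_alpha V r k alpha u v)) as [|HnE]; [left; auto|right].
  destruct Hrl as [Hk [Hr1 [Hrinc HrK]]].
  destruct (idx_exists V r k alpha u Hk) as [iu Hiu].
  destruct (idx_exists V r k alpha v Hk) as [iv Hiv].
  assert (Dvu : euclid_dist v u = D) by (apply edist_sym).
  assert (Hru : r iu < D).
  { apply Rnot_le_lt. intro Hle. apply HnE. left. split; auto. exists iu. split; auto.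
    split; auto. }
  assert (Hrv : r iv < D).
  { apply Rnot_le_lt. intro Hle. apply HnE. right. split; auto. exists iv. split; auto.
    split; auto. split; auto. rewrite Dvu; auto. }
  assert (Gu : ~ has_gap u alpha (S_set V r iu u)).
  { destruct Hiu as [_ [[G _]|[E _]]]; auto. subst iu. lra. }
  assert (Gv : ~ has_gap v alpha (S_set V r iv v)).
  { destruct Hiv as [_ [[G _]|[E _]]]; auto. subst iv. lra. }
  assert (Nu : forall x, S_set V r iu u x -> E_alpha V r k alpha u x).
  { intros x Hx. left. split; auto. exists iu. auto. }
  assert (Nv : forall x, S_set V r iv v x -> E_alpha V r k alpha x v).
  { intros x Hx. right. split; auto. exists iv. auto. }
  destruct (classic (exists x, S_set V r iu u x /\ euclid_dist x v < D)) as [[x [Sx Dx]]|NGu].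
  { destruct Sx as [Hx [Hxu Hdx]] eqn:ESx.
    apply (Pth_trans _ _ _ _ _ x).
    - apply Pth_single; [apply Nu; auto|lra].
    - apply IH'; auto. intro E; subst x. unfold D in *. lra. }
  destruct (classic (exists y, S_set V r iv v y /\ euclid_dist y u < D)) as [[y [Sy Dy]]|NGv].
  { destruct Sy as [Hy [Hyv Hdy]] eqn:ESy.
    apply (Pth_trans _ _ _ _ _ y).
    - apply IH'; auto. intro E; subst y. lra. rewrite edist_sym; auto.
    - apply Pth_single; [apply Nv; auto|]. rewrite edist_sym; lra. }
  destruct (geo u v (S_set V r iu u) (S_set V r iv v) V alpha) as [w [t [Sw [St Dwt]]]]; auto.
  - intros x Hx. destruct Hx as [Hx1 [Hx2 Hx3]] eqn:EH. split; auto. split; auto.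
    split; [fold D; lra|]. fold D. apply Rnot_lt_le. intro Hlt. apply NGu. eauto.
  - intros x Hx. destruct Hx as [Hx1 [Hx2 Hx3]] eqn:EH. split; auto. split; auto.
    split; [fold D; lra|]. fold D. apply Rnot_lt_le. intro Hlt. apply NGv. eauto.
  - fold D in Dwt.
    destruct Sw as [Hw1 [Hw2 Hw3]] eqn:ESw. destruct St as [Ht1 [Ht2 Ht3]] eqn:ESt.
    apply (Pth_trans _ _ _ _ _ w).
    + apply Pth_single; [apply Nu; auto|lra].
    + apply (Pth_trans _ _ _ _ _ t).
      * destruct (classic (w = t)) as [<-|Hne]; [apply Pth_refl|]. apply IH'; auto.
      * apply Pth_single; [apply Nv; auto|]. rewrite edist_sym; lra.
Qed.

Theorem corollary1 (V : list point) (Rad : R) (r : nat -> R) (k : nat)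
    (alpha : R) (u v : point) :
  NoDup V -> 0 < Rad -> radius_levels r k Rad ->
  0 < alpha -> alpha <= 5 * PI / 6 ->
  edge_R V Rad u v ->
  E_alpha V r k alpha u v \/
  exists (m : nat) (p : nat -> point),
    p 0%nat = u /\ p m = v /\
    forall i, (i < m)%nat ->
      E_alpha V r k alpha (p i) (p (S i)) /\ euclid_dist (p i) (p (S i)) < euclid_dist u v.
Proof.
  intros _ HR Hrl H1 H2 He.
  exact (main_ind V Rad r k alpha HR Hrl H1 H2 (S (mu V u v)) u v (Nat.lt_succ_diag_r _) He).
Qed.
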